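(* Let $\mathcal H_1=\mathcal H_2=\mathbb C^2$ and let $|\phi_1\rangle\in\mathcal H_2\otimes\mathcal H_1$ be a unit vector. The two-outcome qubit $1$-tester $T_1=\frac12|\phi_1\rangle\langle\phi_1|$, $T_2=\frac12(I_2\otimes I_1-|\phi_1\rangle\langle\phi_1|)$ (with normalization $I_2\otimes\frac12I_1$) is extremal if and only if $|\phi_1\rangle$ is not a product vector $|f\rangle\otimes|e\rangle$.
   Context: A quantum $1$-tester with $M$ outcomes is a family of positive operators $\{T_i\}_{i=1}^M$ on $\mathcal H_2\otimes\mathcal H_1$ with $\sum_iT_i=I_2\otimes\rho$ for a density operator $\rho$ on $\mathcal H_1$; extremal means an extreme point of the convex set of all such testers with $M$ outcomes. *)

(* Defs.v *)
(* Complex numbers are modelled by algC (algebraic complex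
   numbers, a numClosedFieldType with conjugation); the tensor product of
   matrices is the Kronecker product [tprod] from mathcomp character. *)
From HB Require Import structures.
From mathcomp Require Import all_boot all_order all_algebra all_field all_character.
Set Implicit Arguments. Unset Strict Implicit. Unset Printing Implicit Defensive.
Import Order.TTheory GRing.Theory Num.Theory.
Local Open Scope ring_scope.

Definition adjmx (m n : nat) (A : 'M[algC]_(m, n)) : 'M[algC]_(n, m) :=
  (map_mx Num.conj A)^T.

Definition psdmx (n : nat) (A : 'M[algC]_n) : Prop :=
  forall v : 'cV[algC]_n, 0 <= (adjmx v *m A *m v) 0 0.

Definition density (n : nat) (rho : 'M[algC]_n) : Prop :=
  psdmx rho /\ \tr rho = 1.

Definition is_tester (n2 n1 M : nat) (T : 'I_M -> 'M[algC]_(n2 * n1)) : Prop :=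
  (forall i, psdmx (T i)) /\
  exists rho : 'M[algC]_n1, density rho /\
    \sum_(i < M) T i = tprod (1%:M : 'M[algC]_n2) rho.

Definition extremal_tester (n2 n1 M : nat) (T : 'I_M -> 'M[algC]_(n2 * n1)) : Prop :=
  is_tester T /\
  forall (T' T'' : 'I_M -> 'M[algC]_(n2 * n1)) (t : algC),
    is_tester T' -> is_tester T'' -> 0 < t < 1 ->
    (forall i, T i = t *: T' i + (1 - t) *: T'' i) ->
    forall i, T' i = T i /\ T'' i = T i.

Definition qubit_tester (phi : 'cV[algC]_(2 * 2)) (i : 'I_2) : 'M[algC]_(2 * 2) :=
  if val i == 0%N then 2^-1 *: (phi *m adjmx phi)
  else 2^-1 *: (1%:M - phi *m adjmx phi).

(* Main.v *)
Require Import Defs.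
From HB Require Import structures.
From mathcomp Require Import all_boot all_order all_algebra all_field all_character.
Set Implicit Arguments. Unset Strict Implicit. Unset Printing Implicit Defensive.
Import Order.TTheory GRing.Theory Num.Theory.
Local Open Scope ring_scope.

Section TP.
Variable F : fieldType.

Lemma trowDr n1 (A : 'rV[F]_n1) m2 n2 (B C : 'M[F]_(m2,n2)) :
  trow A (B + C) = trow A B + trow A C.
Proof.
elim: n1 A => [|n1 IH] A /=; first by rewrite addr0.
by rewrite IH scalerDr add_row_mx.
Qed.

Lemma trowZr n1 (A : 'rV[F]_n1) m2 n2 (a : F) (B : 'M[F]_(m2,n2)) :
  trow A (a *: B) = a *: trow A B.
Proof.
elim: n1 A => [|n1 IH] A /=; first by rewrite scaler0.
by rewrite IH scalerA mulrC -scalerA scale_row_mx.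
Qed.

Lemma tprodDr m1 n1 (A : 'M[F]_(m1,n1)) m2 n2 (B C : 'M[F]_(m2,n2)) :
  tprod A (B + C) = tprod A B + tprod A C.
Proof.
elim: m1 n1 A => [|m1 IH] n1 A /=; first by rewrite addr0.
by rewrite IH trowDr add_col_mx.
Qed.

Lemma tprodZr m1 n1 (A : 'M[F]_(m1,n1)) m2 n2 (a : F) (B : 'M[F]_(m2,n2)) :
  tprod A (a *: B) = a *: tprod A B.
Proof.
elim: m1 n1 A => [|m1 IH] n1 A /=; first by rewrite scaler0.
by rewrite IH trowZr scale_col_mx.
Qed.

Lemma tprodNr m1 n1 (A : 'M[F]_(m1,n1)) m2 n2 (B : 'M[F]_(m2,n2)) :
  tprod A (- B) = - tprod A B.
Proof. by rewrite -scaleN1r tprodZr scaleN1r. Qed.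

Lemma tprodBr m1 n1 (A : 'M[F]_(m1,n1)) m2 n2 (B C : 'M[F]_(m2,n2)) :
  tprod A (B - C) = tprod A B - tprod A C.
Proof. by rewrite tprodDr tprodNr. Qed.

Lemma tprod0r m1 n1 (A : 'M[F]_(m1,n1)) m2 n2 :
  tprod A (0 : 'M[F]_(m2,n2)) = 0.
Proof. by rewrite -(scale0r (0 : 'M[F]_(m2,n2))) tprodZr scale0r. Qed.

Lemma tprod_tr' m1 n1 (A :'M[F]_(m1, 1 + n1)) m2 n2 (B :'M[F]_(m2, n2)) :
  tprod A B =  row_mx (trow (lsubmx A)^T B^T)^T (tprod (rsubmx A) B).
Proof.
elim: m1 n1 A m2 n2 B=> [|m1 IH] n1 A m2 n2 B //=.
  by rewrite trmx0 row_mx0.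
rewrite !IH.
pose A1 := A :  'M_(1 + m1, 1 + n1).
have F1: dsubmx (rsubmx A1) = rsubmx (dsubmx A1).
  by apply/matrixP=> i j; rewrite !mxE.
have F2: rsubmx (usubmx A1) = usubmx (rsubmx A1).
  by apply/matrixP=> i j; rewrite !mxE.
have F3: lsubmx (dsubmx A1) = dsubmx (lsubmx A1).
  by apply/matrixP=> i j; rewrite !mxE.
rewrite tr_row_mx -block_mxEv -block_mxEh !(F1,F2,F3); congr block_mx.
- by rewrite !mxE linearZ /= trmxK.
by rewrite -trmx_dsub.
Qed.

Lemma tr_tprod m1 n1 (A : 'M[F]_(m1,n1)) m2 n2 (B : 'M[F]_(m2,n2)) :
  (tprod A B)^T = tprod A^T B^T.
Proof.
elim: m1 n1 A => [|m1 IH] n1 A /=.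
  by apply/matrixP => i j; rewrite !mxE; case: j.
rewrite tr_col_mx IH (tprod_tr' (A^T : 'M_(n1, 1 + m1))).
by rewrite -(trmx_usub (A : 'M_(1 + m1, n1))) -(trmx_dsub (A : 'M_(1 + m1, n1))) !trmxK.
Qed.

End TP.



Lemma map_trow n1 (A : 'rV[algC]_n1) m2 n2 (B : 'M[algC]_(m2,n2)) :
  map_mx Num.conj (trow A B) = trow (map_mx Num.conj A) (map_mx Num.conj B).
Proof.
elim: n1 A => [|n1 IH] A /=; first by rewrite map_mx0.
rewrite map_row_mx IH map_mxZ map_rsubmx; congr row_mx; by rewrite !mxE.
Qed.

Lemma map_tprod m1 n1 (A : 'M[algC]_(m1,n1)) m2 n2 (B : 'M[algC]_(m2,n2)) :
  map_mx Num.conj (tprod A B) = tprod (map_mx Num.conj A) (map_mx Num.conj B).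
Proof.
elim: m1 n1 A => [|m1 IH] n1 A /=; first by rewrite map_mx0.
by rewrite map_col_mx IH map_trow map_usubmx map_dsubmx.
Qed.

Lemma adj_tprod m1 n1 (A : 'M[algC]_(m1,n1)) m2 n2 (B : 'M[algC]_(m2,n2)) :
  adjmx (tprod A B) = tprod (adjmx A) (adjmx B).
Proof. by rewrite /adjmx map_tprod tr_tprod. Qed.


Lemma adjmxM m n p (A : 'M[algC]_(m,n)) (B : 'M[algC]_(n,p)) :
  adjmx (A *m B) = adjmx B *m adjmx A.
Proof. by rewrite /adjmx map_mxM trmx_mul. Qed.

Lemma adjmxK m n (A : 'M[algC]_(m,n)) : adjmx (adjmx A) = A.
Proof. by apply/matrixP => i j; rewrite !mxE conjCK. Qed.

Lemma adjmxD m n (A B : 'M[algC]_(m,n)) : adjmx (A + B) = adjmx A + adjmx B.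
Proof. by apply/matrixP => i j; rewrite !mxE rmorphD. Qed.

Lemma adjmxN m n (A : 'M[algC]_(m,n)) : adjmx (- A) = - adjmx A.
Proof. by apply/matrixP => i j; rewrite !mxE rmorphN. Qed.

Lemma adjmxB m n (A B : 'M[algC]_(m,n)) : adjmx (A - B) = adjmx A - adjmx B.
Proof. by rewrite adjmxD adjmxN. Qed.

Lemma adjmxZ m n a (A : 'M[algC]_(m,n)) : adjmx (a *: A) = a^* *: adjmx A.
Proof. by apply/matrixP => i j; rewrite !mxE rmorphM. Qed.

Lemma adjmx1 n : adjmx (1%:M : 'M[algC]_n) = 1%:M.
Proof. by apply/matrixP => i j; rewrite !mxE conjC_nat eq_sym. Qed.

Lemma adjmx0 m n : adjmx (0 : 'M[algC]_(m,n)) = 0.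
Proof. by apply/matrixP => i j; rewrite !mxE conjC0. Qed.

Lemma normE n (v : 'cV[algC]_n) : (adjmx v *m v) 0 0 = \sum_i `|v i 0| ^+ 2.
Proof. by rewrite mxE; apply: eq_bigr => i _; rewrite !mxE normCK mulrC. Qed.

Lemma norm_ge0 n (v : 'cV[algC]_n) : 0 <= (adjmx v *m v) 0 0.
Proof. by rewrite normE; apply: sumr_ge0 => i _; rewrite exprn_ge0. Qed.

Lemma norm_eq0 n (v : 'cV[algC]_n) : (adjmx v *m v) 0 0 = 0 -> v = 0.
Proof.
rewrite normE => /eqP; rewrite psumr_eq0 => [/allP H|i _]; last by rewrite exprn_ge0.
apply/matrixP => i j; rewrite (ord1 j) !mxE.
have := H i (mem_index_enum i); rewrite sqrf_eq0 normr_eq0 => /eqP ->. done.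
Qed.

Lemma mxE_D m n (A B : 'M[algC]_(m,n)) i j : (A + B) i j = A i j + B i j.
Proof. by rewrite mxE. Qed.
Lemma mxE_B m n (A B : 'M[algC]_(m,n)) i j : (A - B) i j = A i j - B i j.
Proof. by rewrite !mxE. Qed.
Lemma mxE_Z m n a (A : 'M[algC]_(m,n)) i j : (a *: A) i j = a * A i j.
Proof. by rewrite mxE. Qed.

Definition qf n (A : 'M[algC]_n) (v : 'cV[algC]_n) := (adjmx v *m A *m v) 0 0.

Lemma psd_adj m n (B : 'M[algC]_(m,n)) : psdmx (adjmx B *m B).
Proof. by move=> v; rewrite mulmxA -adjmxM -mulmxA norm_ge0. Qed.

Lemma qf_comb n a b (A B : 'M[algC]_n) v :
  qf (a *: A + b *: B) v = a * qf A v + b * qf B v.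
Proof.
rewrite /qf mulmxDr mulmxDl -!scalemxAr -!scalemxAl.
by rewrite mxE_D !mxE_Z.
Qed.

Lemma psdZ n a (A : 'M[algC]_n) : 0 <= a -> psdmx A -> psdmx (a *: A).
Proof.
move=> a0 HA v; have := qf_comb a 0 A 0 v.
rewrite scale0r addr0 mul0r addr0 /qf => ->; exact: mulr_ge0.
Qed.

Lemma psd_proj n (A : 'M[algC]_n) : adjmx A = A -> A *m A = A -> psdmx A.
Proof. by move=> h1 h2; rewrite -h2 -{1}h1; apply: psd_adj. Qed.


Lemma aux_real (c d : algC) : 0 <= d ->
  (forall r : algC, r \is Num.real -> 0 <= r * c + r ^+ 2 * d) -> c = 0.
Proof.
move=> d0 H.
have cR : c \is Num.real.
  have := H 1 (rpred1 _); rewrite mul1r expr1n mul1r => h.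
  by rewrite -(addrK d c) rpredB // ger0_real.
have d1 : 0 < 1 + d by rewrite ltr_wpDr.
set t := (1 + d)^-1.
have t0 : 0 < t by rewrite invr_gt0.
have ht : t * d = 1 - t.
  apply/eqP; rewrite eq_sym subr_eq -{2}(mulr1 t) -mulrDr addrC /t mulVf //.
  by rewrite gt_eqF.
set r := - (c * t).
have rR : r \is Num.real by rewrite rpredN rpredM // gtr0_real.
have e1 : r * c + r ^+ 2 * d = - (t ^+ 2 * c ^+ 2).
  rewrite /r sqrrN mulNr exprMn -mulrA.
  rewrite -[c ^+ 2 * t ^+ 2 * d]mulrA (expr2 t) -[t * t * d]mulrA ht mulrBr mulr1.
  rewrite (mulrCA c t c) -(expr2 c) mulrBr (mulrC (c^+2) t) addrA addNr add0r.
  by rewrite mulrC.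
have := H r rR; rewrite e1 oppr_ge0 => h.
have h2 : 0 <= t ^+ 2 * c ^+ 2.
  apply: mulr_ge0; first by rewrite exprn_ge0 // ltW.
  by rewrite -real_normK // exprn_ge0.
have : t ^+ 2 * c ^+ 2 = 0 by apply/eqP; rewrite eq_le h h2.
by move/eqP; rewrite mulf_eq0 !expf_eq0 /= (gt_eqF t0) => /eqP.
Qed.

Lemma cjM (x y : algC) : (x * y)^* = x^* * y^*.
Proof. exact: rmorphM. Qed.

Definition bf n (A : 'M[algC]_n) (x y : 'cV[algC]_n) := (adjmx x *m A *m y) 0 0.

Lemma qf_expand n (A : 'M[algC]_n) w u s :
  qf A (w + s *: u) = qf A w + s * bf A w u + s^* * bf A u w + s^* * s * qf A u.
Proof.
rewrite /qf /bf adjmxD adjmxZ !mulmxDl !mulmxDr.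
rewrite -!scalemxAl -!scalemxAr !mxE_D !mxE_Z.
by rewrite !addrA mulrA.
Qed.

Lemma psd_kernel n (A : 'M[algC]_n) w : psdmx A -> qf A w = 0 ->
  forall u, bf A u w = 0 /\ bf A w u = 0.
Proof.
move=> HA Hw u.
set b1 := bf A w u; set b2 := bf A u w; set d := qf A u.
have d0 : 0 <= d by apply: HA.
have e1 : forall r : algC, r \is Num.real -> 0 <= r * (b1 + b2) + r ^+ 2 * d.
  move=> r rR; have := HA (w + r *: u); rewrite -/(qf A _) qf_expand Hw (conj_Creal rR).
  by rewrite add0r -mulrDr expr2.
have e2 : forall r : algC, r \is Num.real -> 0 <= r * ('i * (b1 - b2)) + r ^+ 2 * d.
  move=> r rR; have := HA (w + (r * 'i) *: u); rewrite -/(qf A _) qf_expand Hw.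
  rewrite cjM (conj_Creal rR) conjCi add0r.
  have -> : r * - 'i * (r * 'i) = r ^+ 2.
    by rewrite mulrN mulNr mulrACA -expr2 mulCii mulrN1 opprK.
  by rewrite mulrN mulNr !mulrBr !mulrA.
have c1 := aux_real d0 e1.
have c2 := aux_real d0 e2.
move/eqP: c2; rewrite mulf_eq0 (negbTE (@neq0Ci algC)) /= subr_eq0 => /eqP c2.
move: c1; rewrite c2 -mulr2n => /eqP; rewrite mulrn_eq0 /= => /eqP h.
by split; rewrite // c2.
Qed.

Lemma bf_delta n (A : 'M[algC]_n) w k : bf A (delta_mx k 0) w = (A *m w) k 0.
Proof.
rewrite /bf; have -> : adjmx (delta_mx k 0 : 'cV[algC]_n) = delta_mx 0 k.
  by apply/matrixP => i j; rewrite !mxE conjC_nat andbC.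
by rewrite -mulmxA -rowE mxE.
Qed.

Lemma psd_kernel_mx n (A : 'M[algC]_n) w : psdmx A -> qf A w = 0 -> A *m w = 0.
Proof.
move=> HA Hw; apply/matrixP => k j; rewrite (ord1 j) [RHS]mxE -bf_delta.
by case: (psd_kernel HA Hw (delta_mx k 0)).
Qed.


Lemma splitL m n k (H : (k < m + n)%N) (Hk : (k < m)%N) : @split m n (Ordinal H) = inl (Ordinal Hk).
Proof. by apply: (can_inj (@unsplitK m n)); rewrite splitK; apply: val_inj. Qed.
Lemma splitR m n k (H : (k < m + n)%N) (Hk : (m <= k)%N) (Hk' : (k - m < n)%N) : @split m n (Ordinal H) = inr (Ordinal Hk').
Proof. by apply: (can_inj (@unsplitK m n)); rewrite splitK; apply: val_inj; rewrite /= subnKC. Qed.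

Lemma ordc n (i : 'I_n) k (H : (k < n)%N) : nat_of_ord i = k -> i = Ordinal H.
Proof. by move=> h; apply: val_inj. Qed.

Ltac ssplit1 :=
  match goal with |- context [@split ?m ?n (@Ordinal _ ?k ?H)] =>
    let b := eval compute in (k < m)%N in
    match b with
    | true => rewrite (@splitL m n k H isT)
    | false => rewrite (@splitR m n k H isT isT)
    end
  | |- context [@split ?m ?n ?i] =>
    lazymatch i with
    | @Ordinal _ _ _ => fail
    | _ => let k := eval compute in (nat_of_ord i) in
           rewrite (@ordc _ i k isT erefl)
    end
  end.
Ltac normord :=
  repeat match goal with
  | |- context [@fun_of_matrix _ _ _ ?M ?i ?j] =>
    first [ lazymatch i with
            | @Ordinal _ _ isT => fail
            | _ => let k := eval compute in (nat_of_ord i) in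
                   rewrite (@ordc _ i k isT erefl)
            end
          | lazymatch j with
            | @Ordinal _ _ isT => fail
            | _ => let k := eval compute in (nat_of_ord j) in
                   rewrite (@ordc _ j k isT erefl)
            end ]
  end.
Ltac ssplit := repeat (first [ progress rewrite ?mxE /= | ssplit1 ]).

Lemma tprod_r1 (f : 'M[algC]_(2,1)) : tprod f (1%:M : 'M[algC]_1) = f.
Proof.
apply/matrixP => i j; rewrite (ord1 j).
case: i => [[|[|i]] Hi] //=; by ssplit; normord; rewrite mulr1.
Qed.

Lemma cjN (x : algC) : (- x)^* = - x^*.
Proof. exact: rmorphN. Qed.

Lemma ent (phi : 'cV[algC]_(2*2)) (m : 'rV[algC]_2) : m != 0 ->
  tprod (1%:M : 'M[algC]_2) m *m phi = 0 -> exists f e : 'cV[algC]_2, phi = tprod f e.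
Proof.
move=> mn0 hm.
pose m0 := m (@Ordinal 1 0 isT) (@Ordinal 2 0 isT); pose m1 := m (@Ordinal 1 0 isT) (@Ordinal 2 1 isT).
pose s := m0 * m0^* + m1 * m1^*.
have sn0 : s != 0.
  apply: contra mn0 => /eqP hs; apply/eqP/matrixP => i j; rewrite (ord1 i) [RHS]mxE (@ordc 1 0 0 isT erefl).
  move: hs; rewrite /s -!normCK => /eqP; rewrite paddr_eq0 ?exprn_ge0 //.
  rewrite !sqrf_eq0 !normr_eq0 => /andP [/eqP h0 /eqP h1].
  by case: j => [[|[|j]] Hj] //; [transitivity m0 | transitivity m1]; rewrite /m0 /m1 //; congr (m _ _); apply: val_inj.
pose e : 'cV[algC]_2 := \matrix_(i < 2, j < 1) (if val i == 0%N then m1 else - m0).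
pose w : 'cV[algC]_2 := \matrix_(i < 2, j < 1) (if val i == 0%N then m0^* else m1^*).
pose a := s^-1 *: adjmx e; pose b := s^-1 *: m.
have hid : e *m a + w *m b = 1%:M.
  apply/matrixP => i j.
  case: i => [[|[|i]] Hi] //; case: j => [[|[|j]] Hj] //;
    rewrite !mxE !big_ord1 !mxE /= ?cjN; normord; rewrite -/m0 -/m1.
  - by rewrite mulrCA (mulrCA m0^*) -mulrDr (mulrC m0^*) addrC -/s mulVf.
  - by rewrite mulrCA (mulrCA m0^*) -mulrDr mulrN (mulrC m0^*) addNr mulr0.
  - by rewrite mulrCA (mulrCA m1^*) -mulrDr mulNr (mulrC m1^*) addNr mulr0.
  - by rewrite mulrCA (mulrCA m1^*) -mulrDr mulNr mulrN opprK (mulrC m1^*) -/s mulVf.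
pose f : 'cV[algC]_2 := tprod (1%:M : 'M[algC]_2) a *m phi.
exists f, e.
have -> : tprod f e = tprod (1%:M *m f) (e *m 1%:M) by rewrite mul1mx mulmx1.
rewrite tprodE tprod_r1 /f.
have tid : tprod (1%:M : 'M[algC]_2) (1%:M : 'M[algC]_2) =
  tprod (1%:M : 'M[algC]_2) (e *m a) + tprod (1%:M : 'M[algC]_2) (w *m b).
  by rewrite -tprodDr hid.
rewrite -{1}(mul1mx phi) -(@tprod1 algC 2 2) tid !mulmxDl.
rewrite -{1}(mul1mx (1%:M : 'M[algC]_2)) tprodE.
have -> : tprod (1%:M : 'M[algC]_2) (w *m b) = tprod 1%:M w *m tprod 1%:M b.
  by rewrite -tprodE mul1mx.
have hb : tprod (1%:M : 'M[algC]_2) b *m phi = 0.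
  by rewrite /b tprodZr -scalemxAl hm scaler0.
by rewrite -(mulmxA (tprod (1%:M : 'M[algC]_2) w)) hb mulmx0 addr0 mulmxA.
Qed.


Lemma tprod1s (a : algC) : tprod (1%:M : 'M[algC]_2) (a%:M : 'M[algC]_2) = a%:M.
Proof. by rewrite -(scalemx1 2 a) tprodZr tprod1 scalemx1. Qed.

Lemma ent_rho (phi : 'cV[algC]_(2*2)) (rho : 'M[algC]_2) (a : algC) :
  ~ (exists f e : 'cV[algC]_2, phi = tprod f e) ->
  tprod (1%:M : 'M[algC]_2) rho *m phi = a *: phi -> rho = a%:M.
Proof.
move=> np h.
pose M := rho - a%:M.
have hM : tprod (1%:M : 'M[algC]_2) M *m phi = 0.
  by rewrite /M tprodBr tprod1s mulmxBl h mul_scalar_mx subrr.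
apply/eqP; rewrite -subr_eq0 -/M; apply/eqP.
case: (boolP [forall j, row j M == 0]) => H.
  apply/row_matrixP => j; rewrite row0; exact/eqP/(forallP H).
move/forallPn: H => [j hj].
exfalso; apply: np; apply: (ent hj).
rewrite rowE -(mul1mx (1%:M : 'M[algC]_2)) tprodE -mulmxA hM mulmx0.
done.
Qed.

Lemma mx_ext m n (A B : 'M[algC]_(m,n)) : (forall v : 'cV[algC]_n, A *m v = B *m v) -> A = B.
Proof.
move=> H; apply/matrixP => i j.
have := congr1 (fun M : 'cV[algC]_m => M i 0) (H (delta_mx j 0)).
by rewrite -!colE !mxE.
Qed.

Lemma sum2 (F : 'I_2 -> 'M[algC]_(2*2)) : \sum_(i < 2) F i = F ord0 + F ord_max.
Proof. by rewrite big_ord_recr big_ord1 /=; congr (F _ + _); apply: val_inj. Qed.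

Lemma qfZ n a (A : 'M[algC]_n) v : qf (a *: A) v = a * qf A v.
Proof. by rewrite -(addr0 (a *: A)) -(scale0r A) qf_comb mul0r addr0. Qed.

Lemma zero_comb n (X Y : 'M[algC]_n) t u : psdmx X -> psdmx Y -> 0 < t -> 0 <= 1 - t ->
  qf (t *: X + (1 - t) *: Y) u = 0 -> qf X u = 0.
Proof.
move=> HX HY t0 t1; rewrite qf_comb => /eqP.
rewrite paddr_eq0 ?mulr_ge0 ?(ltW t0) //; last exact: HY.
  by case/andP; rewrite mulf_eq0 (gt_eqF t0) => /eqP.
exact: HX.
Qed.


Lemma ord2_cases (i : 'I_2) : i = ord0 \/ i = ord_max.
Proof. by case: i => [[|[|i]] Hi] //; [left|right]; apply: val_inj. Qed.

Lemma key (phi : 'cV[algC]_(2*2)) (X Y : 'I_2 -> 'M[algC]_(2*2)) t :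
  adjmx phi *m phi = 1%:M -> ~ (exists f e : 'cV[algC]_2, phi = tprod f e) ->
  is_tester X -> (forall i, psdmx (Y i)) -> 0 < t -> 0 <= 1 - t ->
  (forall i, qubit_tester phi i = t *: X i + (1 - t) *: Y i) ->
  forall i, X i = qubit_tester phi i.
Proof.
move=> hphi np [HX [rho [[_ rhotr] hsum]]] HY t0 t1 hT.
pose P := phi *m adjmx phi.
have hT0 : qubit_tester phi ord0 = 2^-1 *: P by [].
have hT1 : qubit_tester phi ord_max = 2^-1 *: (1%:M - P) by [].
have s1 : forall u, adjmx phi *m u = 0 -> qf (X ord0) u = 0.
  move=> u hu; apply: (zero_comb (HX _) (HY ord0) t0 t1).
  by rewrite -hT hT0 qfZ /qf /P mulmxA -mulmxA hu mulmx0 mxE mulr0.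
have s2 : X ord_max *m phi = 0.
  apply: psd_kernel_mx; first exact: HX.
  apply: (zero_comb (HX _) (HY ord_max) t0 t1).
  rewrite -hT hT1 qfZ /qf /P mulmxBr mulmxBl mulmx1.
  by rewrite !mulmxA hphi mul1mx hphi subrr mxE mulr0.
have hsum2 : X ord0 + X ord_max = tprod (1%:M : 'M[algC]_2) rho by rewrite -sum2.
pose x := X ord0 *m phi.
have hx : tprod (1%:M : 'M[algC]_2) rho *m phi = x by rewrite -hsum2 mulmxDl s2 addr0.
have s4 : forall u : 'cV[algC]_(2*2), adjmx phi *m u = 0 -> (adjmx u *m x) 0 0 = 0.
  move=> u hu; have [_ h] := psd_kernel (HX ord0) (s1 u hu) phi.
  by move: h; rewrite /bf /x mulmxA.
pose a := (adjmx phi *m x) 0 0.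
have s5 : x = a *: phi.
  pose u := x - a *: phi.
  have hu : adjmx phi *m u = 0.
    by rewrite /u mulmxBr -scalemxAr hphi scalemx1 /a -mx11_scalar subrr.
  have hu2 : adjmx u *m phi = 0 by rewrite -(adjmxK phi) -adjmxM hu adjmx0.
  apply/eqP; rewrite -subr_eq0 -/u; apply/eqP; apply: norm_eq0.
  rewrite {2}/u mulmxBr -scalemxAr hu2 scaler0 subr0; exact: s4.
have s6 : rho = a%:M by apply: (ent_rho np); rewrite hx.
have ha : a = 2^-1.
  move: rhotr; rewrite s6 mxtrace_scalar => h.
  have h2 : (2:algC) != 0 by rewrite pnatr_eq0.
  by apply: (mulIf h2); rewrite mulVf // mulr_natr.
have s8 : X ord0 = 2^-1 *: P.
  apply: mx_ext => v.
  pose u := v - phi *m (adjmx phi *m v).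
  have hu : adjmx phi *m u = 0 by rewrite /u mulmxBr !mulmxA hphi mul1mx subrr.
  have Xu : X ord0 *m u = 0 by apply: psd_kernel_mx; [exact: HX | exact: s1].
  have ev : v = u + phi *m (adjmx phi *m v) by rewrite /u subrK.
  rewrite {1}ev mulmxDr Xu add0r mulmxA -/x s5 -ha.
  by rewrite -!scalemxAl /P !mulmxA.
have s9 : X ord_max = 2^-1 *: (1%:M - P).
  have -> : X ord_max = tprod (1%:M : 'M[algC]_2) rho - X ord0.
    by rewrite -hsum2 (addrC (X ord0)) addrK.
  by rewrite s6 tprod1s s8 ha scalerBr scalemx1.
move=> i; case: (ord2_cases i) => ->; [by rewrite s8 hT0 | by rewrite s9 hT1].
Qed.


Lemma half2 : (2^-1 : algC) *+ 2 = 1.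
Proof. by rewrite -(mulr_natr (2^-1 : algC) 2) mulVf // pnatr_eq0. Qed.

Lemma half_sub : 1 - (2^-1 : algC) = 2^-1.
Proof. by rewrite -{1}half2 mulr2n addrK. Qed.

Lemma half_ge0 : 0 <= (2^-1 : algC).
Proof. by rewrite invr_ge0 ler0n. Qed.

Lemma psd1 n : psdmx (1%:M : 'M[algC]_n).
Proof. by apply: psd_proj; rewrite ?adjmx1 ?mulmx1. Qed.

Lemma psd0 n : psdmx (0 : 'M[algC]_n).
Proof. by move=> v; rewrite mulmx0 mul0mx mxE. Qed.

Lemma projP_facts (phi : 'cV[algC]_(2*2)) : adjmx phi *m phi = 1%:M ->
  let P := phi *m adjmx phi in adjmx P = P /\ P *m P = P.
Proof.
move=> hphi P; split; first by rewrite /P adjmxM adjmxK.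
by rewrite /P mulmxA -(mulmxA phi) hphi mulmx1.
Qed.

Lemma proj_compl n (P : 'M[algC]_n) : adjmx P = P -> P *m P = P ->
  adjmx (1%:M - P) = 1%:M - P /\ (1%:M - P) *m (1%:M - P) = 1%:M - P.
Proof.
move=> h1 h2; split; first by rewrite adjmxB adjmx1 h1.
by rewrite mulmxBl mul1mx mulmxBr mulmx1 h2 subrr subr0.
Qed.

Lemma tester_T (phi : 'cV[algC]_(2*2)) : adjmx phi *m phi = 1%:M ->
  is_tester (qubit_tester phi).
Proof.
move=> hphi; have [h1 h2] := projP_facts hphi.
set P := phi *m adjmx phi in h1 h2.
have [h3 h4] := proj_compl h1 h2.
split.
  move=> i; case: (ord2_cases i) => ->; rewrite /qubit_tester /=;
    (refine (psdZ _ _); [exact: half_ge0 | exact: psd_proj]).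
exists ((2^-1 : algC)%:M); split; first split.
- rewrite -(scalemx1 2 (2^-1)); refine (psdZ _ _); [exact: half_ge0 | exact: psd1].
- by rewrite mxtrace_scalar half2.
rewrite sum2 tprod1s /qubit_tester /= -scalerDr addrC subrK scalemx1.
done.
Qed.


Lemma prod_not_ext (phi : 'cV[algC]_(2*2)) (f e : 'cV[algC]_2) :
  adjmx phi *m phi = 1%:M -> phi = tprod f e -> ~ extremal_tester (qubit_tester phi).
Proof.
move=> hphi hfe [_ Hext].
pose ee := (adjmx e *m e) 0 0.
have ee0 : ee != 0.
  apply/negP => /eqP h; have e0 := norm_eq0 h.
  move: hphi; rewrite hfe e0 tprod0r adjmx0 mulmx0 => /matrixP /(_ 0 0).
  by rewrite !mxE eqxx => /eqP; rewrite eq_sym oner_eq0.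
have eeR : ee^-1 \is Num.real by rewrite rpredV ger0_real // norm_ge0.
pose E := ee^-1 *: (e *m adjmx e).
have hEe : E *m e = e.
  by rewrite /E -scalemxAl -mulmxA (mx11_scalar (adjmx e *m e)) -/ee mul_mx_scalar scalerA mulVf // scale1r.
have adjE : adjmx E = E by rewrite /E adjmxZ adjmxM adjmxK (conj_Creal eeR).
have EE : E *m E = E by rewrite {2}/E -scalemxAr mulmxA hEe.
have trE : \tr E = 1 by rewrite /E mxtraceZ mxtrace_mulC trace_mx11 -/ee mulVf.
pose Q := 1%:M - E.
have [adjQ QQ] := proj_compl adjE EE.
have trQ : \tr Q = 1 by rewrite /Q linearB /= mxtrace1 trE mulr2n addrK.
have EQ : E + Q = 1%:M by rewrite /Q addrC subrK.
pose G := tprod (1%:M : 'M[algC]_2) E.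
have adjG : adjmx G = G by rewrite /G adj_tprod adjmx1 adjE.
have GG : G *m G = G by rewrite /G -tprodE mulmx1 EE.
have Gphi : G *m phi = phi.
  by rewrite /G hfe; have := tprodE (1%:M : 'M[algC]_2) f E e; rewrite mul1mx hEe.
have [adjP PP] := projP_facts hphi.
set P := phi *m adjmx phi in adjP PP.
have GP : G *m P = P by rewrite /P mulmxA Gphi.
have PG : P *m G = P by rewrite /P -mulmxA -{1}adjG -adjmxM Gphi.
pose R := G - P.
have adjR : adjmx R = R by rewrite /R adjmxB adjG adjP.
have RR : R *m R = R.
  by rewrite /R mulmxBl !mulmxBr GG GP PG PP subrr subr0.
pose T1 := fun i : 'I_2 => if val i == 0%N then P else R.
pose T2 := fun i : 'I_2 => if val i == 0%N then 0 else tprod (1%:M : 'M[algC]_2) Q.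
have HT1 : is_tester T1.
  split.
    move=> i; case: (ord2_cases i) => -> /=; rewrite /T1 /=; exact: psd_proj.
  exists E; split; first split; [exact: psd_proj | exact: trE |].
  by rewrite sum2 /T1 /= /R addrC subrK.
have HT2 : is_tester T2.
  split.
    move=> i; case: (ord2_cases i) => -> /=; rewrite /T2 /=; first exact: psd0.
    apply: psd_proj; first by rewrite adj_tprod adjmx1 adjQ.
    by rewrite -tprodE mulmx1 QQ.
  exists Q; split; first split; [exact: psd_proj | exact: trQ |].
  by rewrite sum2 /T2 /= add0r.
have t01 : 0 < (2^-1 : algC) < 1.
  by rewrite invr_gt0 ltr0n /= invf_lt1 ?ltr0n // ltr1n.
have hdec : forall i, qubit_tester phi i = 2^-1 *: T1 i + (1 - 2^-1) *: T2 i.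
  move=> i; rewrite half_sub; case: (ord2_cases i) => ->; rewrite /qubit_tester /T1 /T2 /=.
    by rewrite scaler0 addr0.
  rewrite -scalerDr /R addrAC -tprodDr EQ tprod1.
  done.
have [h _] := Hext T1 T2 (2^-1) HT1 HT2 t01 hdec ord0.
move: h; rewrite /T1 /qubit_tester /= => /(congr1 (fun M => qf M phi)).
have qP : qf P phi = 1.
  by rewrite /qf /P !mulmxA hphi mul1mx hphi mxE eqxx.
rewrite qfZ qP mulr1 => /eqP; rewrite eq_sym invr_eq1 pnatr_eq1.
done.
Qed.


Theorem mainTheorem11 (phi : 'cV[algC]_(2 * 2)) :
  adjmx phi *m phi = 1%:M ->
  (extremal_tester (qubit_tester phi) <->
   ~ exists (f e : 'cV[algC]_2), phi = tprod f e).
Proof.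
move=> hphi; split.
  by move=> Hext [f [e hfe]]; exact: (prod_not_ext hphi hfe Hext).
move=> np; split; first exact: tester_T.
move=> T' T'' t HT' HT'' /andP [t0 t1] hdec i; split.
  apply: (key hphi np HT' HT''.1 t0 _ hdec); by rewrite subr_ge0 ltW.
apply: (key hphi np HT'' HT'.1 (t := 1 - t)); first by rewrite subr_gt0.
  by rewrite subKr ltW.
by move=> j; rewrite subKr addrC hdec.
Qed.
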